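(* Let $\{1/N,\rho_x\}_{x=1}^N$ be an ensemble of density operators on a finite-dimensional Hilbert space given with equal prior probabilities $1/N$, and let $K$, $\{r_x,\sigma_x\}$, $\{M_x\}$ be a symmetry operator, complementary states and POVM, i.e. $K$ Hermitian, $r_x\ge 0$, $\sigma_x$ density operators, $\{M_x\}$ a POVM, with $K=\frac1N\rho_x+r_x\sigma_x$ and $r_x\mathrm{tr}[M_x\sigma_x]=0$ for all $x$. Then all $r_x$ are equal to a common value $r$, and $$P_{\mathrm{guess}}=\frac1N+r,$$ where $r=\dfrac{\|\frac1N\rho_x-\frac1N\rho_y\|_1}{\|\sigma_x-\sigma_y\|_1}$ for any $x,y$ with $\sigma_x\ne\sigma_y$.
   Context: $P_{\mathrm{guess}}=\max_{\{M_x\}}\sum_x \frac1N\mathrm{tr}[M_x\rho_x]$ over POVMs (positive semidefinite operators summing to the identity). $\|\cdot\|_1$ is the trace norm. *)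

(* Defs.v *)
From HB Require Import structures.
From mathcomp Require Import all_boot all_order all_algebra.
Set Implicit Arguments. Unset Strict Implicit. Unset Printing Implicit Defensive.
Import Order.TTheory GRing.Theory Num.Theory.
Local Open Scope ring_scope.

Definition adjmx (C : numClosedFieldType) m n (A : 'M[C]_(m, n)) : 'M[C]_(n, m) :=
  map_mx Num.conj (A^T).

Definition is_hermitian (C : numClosedFieldType) d (A : 'M[C]_d) : Prop :=
  A = adjmx A.

Definition psd (C : numClosedFieldType) d (A : 'M[C]_d) : Prop :=
  is_hermitian A /\ forall v : 'rV[C]_d, 0 <= (v *m A *m adjmx v) 0 0.

Definition density (C : numClosedFieldType) d (rho : 'M[C]_d) : Prop :=
  psd rho /\ \tr rho = 1.

Definition povm (C : numClosedFieldType) d N (M : 'I_N -> 'M[C]_d) : Prop :=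
  (forall x, psd (M x)) /\ \sum_(x < N) M x = 1%:M.

Definition succ_prob (C : numClosedFieldType) d N (rho M : 'I_N -> 'M[C]_d) : C :=
  \sum_(x < N) N%:R^-1 * \tr (M x *m rho x).

Definition is_Pguess (C : numClosedFieldType) d N (rho : 'I_N -> 'M[C]_d) (p : C)
  : Prop :=
  (exists M, povm M /\ succ_prob rho M = p) /\
  (forall M, povm M -> succ_prob rho M <= p).

(* trace norm ||A||_1 = tr sqrt(A^* A): A^* A is Hermitian PSD, with spectral
   decomposition A^* A = P^-1 diag(D) P (P unitary), so sqrt(A^* A) =
   P^-1 diag(sqrt D) P and its trace is the sum of the sqrt of the entries of D. *)
Definition trnorm (C : numClosedFieldType) d (A : 'M[C]_d) : C :=
  \sum_(i < d) sqrtC (spectral_diag (adjmx A *m A) 0 i).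

(* Main.v *)
Require Import Defs.
From HB Require Import structures.
From mathcomp Require Import all_boot all_order all_algebra.
Import Order.TTheory GRing.Theory Num.Theory.
Local Open Scope ring_scope.
Set Implicit Arguments. Unset Strict Implicit. Unset Printing Implicit Defensive.
Section S.
Variable C : numClosedFieldType.
Local Open Scope sesquilinear_scope.
Lemma adjE m n (A : 'M[C]_(m,n)) : adjmx A = A ^t*.
Proof. by []. Qed.

Lemma psd_entry d (A P : 'M[C]_d) i : psd A -> 0 <= (P *m A *m adjmx P) i i.
Proof.
case=> _ /(_ (row i P)); congr (0 <= _).
rewrite !mxE; apply: eq_bigr => j _; rewrite !mxE; congr (_ * _).
by apply: eq_bigr => k _; rewrite !mxE.
Qed.

Lemma herm_normal d (X : 'M[C]_d) : is_hermitian X -> X \is normalmx.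
Proof. rewrite /is_hermitian adjE => h; apply/normalmxP; by rewrite -h. Qed.

Lemma herm_spec d (X : 'M[C]_d) : is_hermitian X ->
  X = adjmx (spectralmx X) *m diag_mx (spectral_diag X) *m spectralmx X.
Proof.
move=> /herm_normal /orthomx_spectralP E.
by rewrite adjE -invmx_unitary ?spectral_unitarymx.
Qed.

Lemma diag_spec d (X : 'M[C]_d) : is_hermitian X ->
  spectralmx X *m X *m adjmx (spectralmx X) = diag_mx (spectral_diag X).
Proof.
move=> h; rewrite {2}(herm_spec h).
have U := spectral_unitarymx X.
rewrite adjE -invmx_unitary // !mulmxA mulmxV ?unitarymx_unit // mul1mx.
by rewrite -mulmxA mulmxV ?unitarymx_unit // mulmx1.
Qed.

Lemma eig_ge0 d (X : 'M[C]_d) i : psd X -> 0 <= spectral_diag X 0 i.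
Proof.
move=> p; have := psd_entry (spectralmx X) i p.
by rewrite diag_spec; [rewrite mxE eqxx mulr1n | case: p].
Qed.

Lemma psd_tr d (A B : 'M[C]_d) : psd A -> psd B -> 0 <= \tr (A *m B).
Proof.
move=> pA pB; rewrite [B in A *m B](herm_spec pB.1) !mulmxA mxtrace_mulC !mulmxA.
rewrite mul_mx_diag /mxtrace; apply: sumr_ge0 => i _; rewrite mxE.
by apply: mulr_ge0; [apply: psd_entry | apply: eig_ge0].
Qed.
Lemma char_poly_sim d (P A : 'M[C]_d) : P \in unitmx ->
  char_poly (invmx P *m A *m P) = char_poly A.
Proof.
move=> uP.
have E : char_poly_mx (invmx P *m A *m P) =
   map_mx polyC (invmx P) *m char_poly_mx A *m map_mx polyC P.
  rewrite /char_poly_mx mulmxBr mulmxBl -!map_mxM.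
  rewrite scalar_mxC -(mulmxA 'X%:M) -map_mxM mulVmx // map_mx1 mulmx1.
  by [].
rewrite /char_poly E !det_mulmx !det_map_mx mulrC mulrA -rmorphM.
by rewrite -det_mulmx mulmxV // det1 rmorph1 mul1r.
Qed.

Lemma sum_spec d (X P : 'M[C]_d) (s : 'rV[C]_d) (f : C -> C) :
  is_hermitian X -> P \in unitmx -> X = invmx P *m diag_mx s *m P ->
  \sum_(i < d) f (spectral_diag X 0 i) = \sum_(i < d) f (s 0 i).
Proof.
move=> h uP E.
have E2 := herm_spec h.
have U := spectral_unitarymx X.
have cp : forall t : 'rV[C]_d, char_poly (diag_mx t) =
    \prod_(x <- [seq t 0 i | i <- enum 'I_d]) ('X - x%:P).
  move=> t; rewrite char_poly_trig ?diag_mx_is_trig // big_map big_enum /=.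
  by apply: eq_bigr => i _; rewrite mxE eqxx mulr1n.
have pe : perm_eq [seq spectral_diag X 0 i | i <- enum 'I_d]
                  [seq s 0 i | i <- enum 'I_d].
  apply: prod_XsubC_eq; rewrite -!cp.
  rewrite -(char_poly_sim _ (unitarymx_unit U)) -(char_poly_sim _ uP) -E.
  by rewrite invmx_unitary // -adjE -E2.
have H : forall t : 'I_d -> C, \sum_(i < d) f (t i) =
   \sum_(x <- [seq t i | i <- enum 'I_d]) f x.
  by move=> t; rewrite big_map big_enum.
rewrite (H (fun i => spectral_diag X 0 i)) (H (fun i => s 0 i)).
exact: perm_big.
Qed.
Lemma adjM m n p (A : 'M[C]_(m,n)) (B : 'M[C]_(n,p)) : adjmx (A *m B) = adjmx B *m adjmx A.
Proof. by rewrite !adjE trmx_mul map_mxM. Qed.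
Lemma adjK m n (A : 'M[C]_(m,n)) : adjmx (adjmx A) = A.
Proof. by rewrite !adjE trmxCK. Qed.
Lemma adjZ m n c (A : 'M[C]_(m,n)) : adjmx (c *: A) = c^* *: adjmx A.
Proof. by apply/matrixP => i j; rewrite !mxE rmorphM. Qed.

Lemma G_psd d (D : 'M[C]_d) : psd (adjmx D *m D).
Proof.
split; first by rewrite /is_hermitian adjM adjK.
move=> v; have e : adjmx (v *m adjmx D) = D *m adjmx v by rewrite adjM adjK.
rewrite mulmxA -mulmxA -e.
set w := v *m adjmx D.
rewrite mxE; apply: sumr_ge0 => j _; rewrite !mxE; exact: mul_conjC_ge0.
Qed.

Lemma trnormZ d c (D : 'M[C]_d) : trnorm (c *: D) = `|c| * trnorm D.
Proof.
rewrite /trnorm adjZ -scalemxAr -scalemxAl.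
set X := adjmx D *m D.
have hX := (G_psd D).1.
have E : X = adjmx (spectralmx X) *m diag_mx (spectral_diag X) *m spectralmx X := herm_spec hX.
have U := spectral_unitarymx X.
have uP := unitarymx_unit U.
have E' : (c * c^*) *: X = invmx (spectralmx X) *m diag_mx ((c * c^*) *: spectral_diag X) *m spectralmx X.
  rewrite invmx_unitary // -adjE {1}E.
  rewrite scalemxAl scalemxAr; congr (_ *m _ *m _); apply/matrixP => i j; rewrite !mxE.
  by rewrite mulrnAr.
have h2 : is_hermitian ((c * c^*) *: X).
  by have := (G_psd (c *: D)).1; rewrite adjZ -scalemxAr -scalemxAl scalerA.
rewrite scalerA (sum_spec sqrtC h2 uP E') mulr_sumr; apply: eq_bigr => i _.
have g := eig_ge0 i (G_psd D).
rewrite mxE -normCK sqrtCM ?nnegrE ?exprn_ge0 // sqrCK //.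
Qed.

Lemma trnorm_eq0 d (D : 'M[C]_d) : trnorm D = 0 -> D = 0.
Proof.
rewrite /trnorm => /eqP; rewrite psumr_eq0 => [/allP H|i _]; last first.
  by rewrite sqrtC_ge0; apply: eig_ge0; apply: G_psd.
have s0 : spectral_diag (adjmx D *m D) = 0.
  apply/rowP => i; have := H i (mem_index_enum _).
  by rewrite /= sqrtC_eq0 mxE => /eqP.
have G0 : adjmx D *m D = 0.
  by rewrite (herm_spec (G_psd D).1) s0 linear0 mulmx0 mul0mx.
apply/matrixP => i j; have /matrixP /(_ j j) := G0.
rewrite !mxE => /eqP; rewrite psumr_eq0 => [/allP /(_ i (mem_index_enum _))|k _].
  by rewrite /= !mxE mulrC mul_conjC_eq0 => /eqP.
by rewrite !mxE mulrC mul_conjC_ge0.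
Qed.
End S.

Unset Implicit Arguments.
Theorem proposition3 (C : numClosedFieldType) (d N : nat) (HN : (0 < N)%N)
  (rho : 'I_N -> 'M[C]_d) (K : 'M[C]_d) (r : 'I_N -> C)
  (sigma M : 'I_N -> 'M[C]_d) :
  (forall x, density (rho x)) ->
  is_hermitian K ->
  (forall x, 0 <= r x) ->
  (forall x, density (sigma x)) ->
  povm M ->
  (forall x, K = N%:R^-1 *: rho x + r x *: sigma x) ->
  (forall x, r x * \tr (M x *m sigma x) = 0) ->
  exists r0 : C,
    (forall x, r x = r0) /\
    is_Pguess rho (N%:R^-1 + r0) /\
    (forall x y, sigma x != sigma y ->
       r0 = trnorm (N%:R^-1 *: rho x - N%:R^-1 *: rho y)
            / trnorm (sigma x - sigma y)).
Proof.
move=> Hrho hK Hr Hsig [HMpsd HMsum] HK Hcomp.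
set r0 := \tr K - N%:R^-1.
have tr1 : forall x, \tr K = N%:R^-1 + r x.
  by move=> x; rewrite (HK x) mxtraceD !mxtraceZ (Hrho x).2 (Hsig x).2 !mulr1.
have Hrx : forall x, r x = r0.
  by move=> x; rewrite /r0 (tr1 x) addrAC subrr add0r.
have tK : \tr K = N%:R^-1 + r0 by rewrite /r0 addrC subrK.
have key : forall M', \sum_(x < N) M' x = 1%:M ->
    succ_prob rho M' = \tr K - \sum_(x < N) r0 * \tr (M' x *m sigma x).
  move=> M' hs; rewrite /succ_prob.
  have e : forall x, N%:R^-1 * \tr (M' x *m rho x)
      = \tr (M' x *m K) - r0 * \tr (M' x *m sigma x).
    move=> x; rewrite (HK x) (Hrx x) mulmxDr -!scalemxAr mxtraceD !mxtraceZ.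
    by rewrite addrK.
  rewrite (eq_bigr _ (fun x _ => e x)) sumrB -raddf_sum -mulmx_suml hs mul1mx.
  by [].
exists r0; split => //; split.
  split.
    exists M; split => //; rewrite key // big1 ?subr0 // => x _.
    by rewrite -(Hrx x); exact: Hcomp.
  move=> M' [hp hs]; rewrite key // -tK lerBlDr lerDl.
  apply: sumr_ge0 => x _; apply: mulr_ge0.
    by rewrite -(Hrx x); exact: Hr.
  exact: psd_tr (hp x) (Hsig x).1.
move=> x y hxy.
have ex : forall z, N%:R^-1 *: rho z = K - r0 *: sigma z.
  by move=> z; rewrite (HK z) (Hrx z) addrK.
have e : N%:R^-1 *: rho x - N%:R^-1 *: rho y = (- r0) *: (sigma x - sigma y).
  rewrite !ex opprB addrC addrA subrK scaleNr scalerBr opprB.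
  by [].
have r0ge : 0 <= r0 by rewrite -(Hrx x).
have tn : trnorm (sigma x - sigma y) != 0.
  apply: contra hxy => /eqP/trnorm_eq0/eqP; by rewrite subr_eq0.
by rewrite e trnormZ normrN ger0_norm // mulfK.
Qed.
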